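(* Let $d=(d_1,\ldots,d_n)$ be a degree sequence with $n\ge 4$, and let $m=\frac12\sum_i d_i$. There is a realization of $d$ as a bridge-less bipartite cactus if and only if $m\le 2\left\lfloor\frac{2(n-1)}{3}\right\rfloor$, $m$ is even, and $d_i$ is even for every $i$.
   Context: A degree sequence is a sequence $d=(d_1,\ldots,d_n)$ of integers with $d_i\in\{1,\ldots,n-1\}$, even sum, and $d_1\ge\cdots\ge d_n$. A realization of $d$ is a simple graph on $\{1,\ldots,n\}$ in which vertex $i$ has degree $d_i$. A cactus is a connected simple graph in which every edge lies on at most one cycle; it is bridge-less if no edge's removal disconnects it. *)

(* Defs.v *)
From mathcomp Require Import all_boot.
Set Implicit Arguments. Unset Strict Implicit. Unset Printing Implicit Defensive.

Section Graphs.
Variable T : finType.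

Definition simple_graph (e : rel T) : Prop :=
  symmetric e /\ irreflexive e.

Definition deg (e : rel T) (x : T) : nat := #|[set y | e x y]|.

Definition connected_graph (e : rel T) : Prop :=
  forall x y : T, connect e x y.

Definition is_cycle (e : rel T) (p : seq T) : Prop :=
  [/\ uniq p, 3 <= size p & cycle e p].

(* the edge set of the cycle p, as ordered pairs (both orientations) *)
Definition cycle_edges (p : seq T) : {set T * T} :=
  [set uv | (uv.1 \in p) && (uv.2 \in p) &&
            ((next p uv.1 == uv.2) || (next p uv.2 == uv.1))].

(* every edge lies on at most one cycle (cycles compared as edge sets) *)
Definition is_cactus (e : rel T) : Prop :=
  connected_graph e /\
  forall (u v : T) (p q : seq T), e u v ->
    is_cycle e p -> is_cycle e q ->
    (u, v) \in cycle_edges p -> (u, v) \in cycle_edges q ->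
    cycle_edges p = cycle_edges q.

Definition remove_edge (e : rel T) (u v : T) : rel T :=
  fun x y => e x y && ~~ (((x == u) && (y == v)) || ((x == v) && (y == u))).

Definition bridgeless (e : rel T) : Prop :=
  forall u v : T, e u v -> connected_graph (remove_edge e u v).

Definition bipartite (e : rel T) : Prop :=
  exists f : T -> bool, forall x y : T, e x y -> f x != f y.

End Graphs.

(* degree sequence d_1 >= ... >= d_n, indexed by 'I_n (vertex i+1 is ordinal i) *)
Definition degree_sequence (n : nat) (d : 'I_n -> nat) : Prop :=
  [/\ forall i, 1 <= d i <= n - 1,
      ~~ odd (\sum_(i < n) d i)
    & forall i j : 'I_n, i <= j -> d j <= d i].

Definition realization (n : nat) (d : 'I_n -> nat) (e : rel 'I_n) : Prop :=
  simple_graph e /\ forall i, deg e i = d i.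

(* Main.v *)
Require Import Defs.
From mathcomp Require Import all_boot zify.
From Stdlib Require Import ClassicalEpsilon.
Set Implicit Arguments. Unset Strict Implicit. Unset Printing Implicit Defensive.


Section Cyc.
Variable T : finType.
Implicit Types (c p q : seq T) (u v x y : T).

Lemma rot_head c x : uniq c -> x \in c -> exists r,
  [/\ uniq (x :: r), size (x::r) = size c, next c =1 next (x::r),
      prev c =1 prev (x::r) & c =i x :: r].
Proof.
move=> uc xc; case: (rot_to xc) => i r Hr; exists r; rewrite -Hr.
split; first by rewrite rot_uniq.
- by rewrite size_rot.
- by move=> y; rewrite next_rot.
- by move=> y; rewrite prev_rot.
- by move=> y; rewrite mem_rot.
Qed.

Lemma next_head x r : next (x :: r) x = head x r.
Proof. by case: r => [|y r] /=; rewrite eqxx. Qed.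

Lemma prev_head x r : uniq (x :: r) -> prev (x :: r) x = last x r.
Proof.
move=> u; rewrite prev_nth mem_head /=.
move: u => /= /andP[xr _]. have -> : index x r = size r.
  by apply/eqP; rewrite eqn_leq index_size leqNgt index_mem xr.
by rewrite -[size r]/((size (x :: r)).-1) nth_last.
Qed.

Lemma next_neq_prev c x : uniq c -> 2 < size c -> x \in c -> next c x != prev c x.
Proof.
move=> uc sc xc; have [r [ur sr hn hp _]] := rot_head uc xc.
rewrite hn hp next_head prev_head //; clear hn hp.
rewrite -sr in sc; clear sr.
case: r ur sc => [|y [|z r]] //= ur _.
case/andP: ur => _ /andP[yr _].
apply/eqP=> eyl; move: yr; rewrite eyl.
by rewrite (mem_last z r).
Qed.

Lemma next_neq c x : uniq c -> 1 < size c -> x \in c -> next c x != x.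
Proof.
move=> uc sc xc; have [r [ur sr hn hp _]] := rot_head uc xc.
rewrite hn next_head; clear hn hp; rewrite -sr in sc; clear sr.
case: r ur sc => [|y r] //= /andP[xr _] _.
by apply/eqP=> eyx; move: xr; rewrite -eyx mem_head.
Qed.

Lemma ce_char c u v : uniq c ->
  ((u, v) \in cycle_edges c) = (u \in c) && ((v == next c u) || (v == prev c u)).
Proof.
move=> uc; rewrite inE /=.
case uin: (u \in c) => //=.
apply/idP/idP.
- case/andP=> vin /orP[/eqP<-|/eqP<-]; first by rewrite eqxx.
  by rewrite prev_next // eqxx orbT.
- case/orP=> /eqP->.
  + by rewrite mem_next uin eqxx.
  + by rewrite mem_prev uin next_prev // eqxx orbT.
Qed.

Lemma ce_sym c u v : ((u, v) \in cycle_edges c) = ((v, u) \in cycle_edges c).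
Proof. by rewrite !inE /= (andbC (v \in c)) orbC. Qed.

Lemma ce_mem c u v : (u, v) \in cycle_edges c -> (u \in c) && (v \in c).
Proof. by rewrite inE /= => /andP[]. Qed.

Lemma ce_irr c u : uniq c -> 1 < size c -> (u, u) \notin cycle_edges c.
Proof.
move=> uc sc; rewrite inE /= orbb; apply/negP => /andP[/andP[uin _] /eqP h].
by move: (next_neq uc sc uin); rewrite h eqxx.
Qed.

Lemma ce_nbr c u : uniq c -> 2 < size c ->
  #|[set y | (u, y) \in cycle_edges c]| = if u \in c then 2 else 0.
Proof.
move=> uc sc; case uin: (u \in c).
- have -> : [set y | (u, y) \in cycle_edges c] = [set next c u; prev c u].
    by apply/setP=> y; rewrite in_set ce_char // uin !inE.
  by rewrite cards2 next_neq_prev.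
- apply/eqP; rewrite cards_eq0; apply/eqP/setP=> y; rewrite in_set ce_char //.
  by rewrite uin inE.
Qed.

Lemma ce_sub (e : rel T) c u v : symmetric e -> cycle e c ->
  (u, v) \in cycle_edges c -> e u v.
Proof.
move=> se ce; rewrite inE /= => /andP[/andP[uin vin] /orP[/eqP<-|/eqP<-]].
- exact: next_cycle.
- by rewrite se; apply: next_cycle.
Qed.

Lemma cycle_ce c : uniq c -> cycle (fun x y => (x, y) \in cycle_edges c) c.
Proof.
move=> uc; apply: cycle_from_next => // x xin.
by rewrite inE /= xin mem_next xin eqxx.
Qed.

Lemma next_closure p (A : pred T) y0 : uniq p -> y0 \in p -> A y0 ->
  (forall y, y \in p -> A y -> A (next p y)) -> forall y, y \in p -> A y.
Proof.
move=> up y0p Ay0 cl y yp.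
have := fconnect_cycle (cycle_next up) y0p y; rewrite yp => /connectP[q].
elim: q y0 y0p Ay0 => [|z q IH] x xp Ax /=; first by move=> _ ->.
case/andP=> /eqP hz hq hl; apply: (IH z) => //; rewrite -hz.
- by rewrite mem_next.
- exact: cl.
Qed.

Lemma ce_incl c p : uniq c -> 2 < size c -> uniq p -> 2 < size p ->
  {subset cycle_edges c <= cycle_edges p} -> cycle_edges p = cycle_edges c.
Proof.
move=> uc sc up sp hsub.
have nb : forall w, w \in c -> (w \in p) /\
   (forall y, ((y == next p w) || (y == prev p w)) = ((y == next c w) || (y == prev c w))).
  move=> w wc.
  have h1 := hsub _ (etrans (ce_char _ _ uc) (introT andP (conj wc (introT orP (or_introl (eqxx (next c w))))))).
  have h2 := hsub _ (etrans (ce_char _ _ uc) (introT andP (conj wc (introT orP (or_intror (eqxx (prev c w))))))).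
  rewrite ce_char // in h1; rewrite ce_char // in h2.
  case/andP: h1 => wp h1; case/andP: h2 => _ h2; split=> // y.
  have hne := next_neq_prev uc sc wc. have hne' := next_neq_prev up sp wp.
  case/orP: h1 => /eqP h1; case/orP: h2 => /eqP h2.
  - by move: hne; rewrite h1 h2 eqxx.
  - by rewrite h1 h2.
  - by rewrite h1 h2 orbC.
  - by move: hne; rewrite h1 h2 eqxx.
have pc : forall y, y \in p -> y \in c.
  have [w0 w0c] : exists w0, w0 \in c.
    by case: (c) sc => [|w0 c'] //; exists w0; rewrite mem_head.
  apply: (next_closure (A := fun y => y \in c) up (nb _ w0c).1 w0c).
  move=> y yp yc; have [_ h] := nb _ yc.
  have := h (next p y); rewrite eqxx orTb => /esym /orP[/eqP->|/eqP->].
  + by rewrite mem_next.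
  + by rewrite mem_prev.
apply/setP=> [[u v]]; rewrite !ce_char //.
case uc': (u \in c).
- by have [-> h] := nb _ uc'; rewrite h.
- by case up': (u \in p) => //; rewrite pc in uc'.
Qed.
End Cyc.

Section Fwd.
Variable T : finType.
Implicit Types (c p q : seq T) (u v x y : T).

Lemma edge_on_cycle (e : rel T) u v : symmetric e -> irreflexive e -> e u v ->
  connect (remove_edge e u v) u v ->
  exists p, is_cycle e p /\ (u, v) \in cycle_edges p.
Proof.
move=> se ie euv /connectP[q hq hv].
case: (shortenP hq) hv => q' hq' uq' _ hv.
have hsub : subrel (remove_edge e u v) e by move=> a b /andP[].
have sq : 2 <= size q'.
  case: q' hq' uq' hv => [|w [|w' r]] //= hq' uq' hv.
  - by move: euv; rewrite hv ie.
  - by move: hq'; rewrite /= andbT /remove_edge -hv !eqxx /= andbF.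
exists (u :: q'); split; first split=> //.
- rewrite /cycle rcons_path (sub_path hsub hq') /= -hv.
  by rewrite se.
- have hp : prev (u :: q') u = v by rewrite prev_head.
  by rewrite ce_char // mem_head hp eqxx orbT.
Qed.

Lemma path_color (e : rel T) (f : T -> bool) x p :
  (forall a b, e a b -> f a != f b) -> path e x p ->
  f (last x p) = f x (+) odd (size p).
Proof.
move=> hf; elim: p x => [|y p IH] x /=; first by rewrite addbF.
case/andP=> exy hp; rewrite IH //; move: (hf _ _ exy).
by case: (f x); case: (f y); case: (odd (size p)).
Qed.

Lemma cycle_even (e : rel T) (f : T -> bool) p :
  (forall a b, e a b -> f a != f b) -> cycle e p -> ~~ odd (size p).
Proof.
move=> hf; case: p => [|x r] //=; rewrite rcons_path => /andP[hp hl].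
move: (hf _ _ hl); rewrite (path_color hf hp).
by case: (f x); case: (odd (size r)).
Qed.

Lemma card_pairs (A : {set T * T}) : #|A| = \sum_u #|[set y | (u, y) \in A]|.
Proof.
rewrite -sum1_card big_mkcond /=.
rewrite (eq_bigr (fun u => \sum_y (if (u, y) \in A then 1 else 0))).
  by rewrite pair_big /=; apply: eq_bigr => [[u y]].
move=> u _; rewrite -sum1_card big_mkcond /=; apply: eq_bigr => y _.
by rewrite inE.
Qed.

Lemma card_ce c : uniq c -> 2 < size c -> #|cycle_edges c| = 2 * size c.
Proof.
move=> uc sc; rewrite card_pairs (eq_bigr (fun u => if u \in c then 2 else 0)).
  by rewrite -big_mkcond /= sum_nat_const (card_uniqP uc) mulnC.
by move=> u _; rewrite ce_nbr.
Qed.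

Lemma inv_even (A : {set T}) (g : T -> T) :
  (forall y, y \in A -> g y \in A) -> (forall y, y \in A -> g y != y) ->
  (forall y, y \in A -> g (g y) = y) -> ~~ odd #|A|.
Proof.
move=> h1 h2 h3; have [n] := ubnP #|A|.
elim: n A h1 h2 h3 => // n IH A h1 h2 h3 hA.
case: (set_0Vmem A) => [->|[y yA]]; first by rewrite cards0.
have gyA : g y \in A :\ y by rewrite !inE h2 // h1.
have hc : #|A| = (#|A :\ y :\ g y|).+2.
  by rewrite (cardsD1 y A) yA (cardsD1 (g y) (A :\ y)) gyA.
have : ~~ odd #|A :\ y :\ g y|.
  apply: IH.
  - move=> z; rewrite !inE => /and3P[zgy zy zA]; rewrite h1 // andbT.
    apply/andP; split; apply/eqP=> hz.
    + by move: zy; rewrite -(h3 _ zA) hz h3 ?eqxx.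
    + by move: zgy; rewrite -hz h3 ?eqxx.
  - by move=> z; rewrite !inE => /and3P[_ _ zA]; apply: h2.
  - by move=> z; rewrite !inE => /and3P[_ _ zA]; apply: h3.
  - by move: hA; rewrite hc; lia.
by rewrite hc /=; rewrite negbK.
Qed.

Section Acyc.
Variable e : rel T.
Hypothesis se : symmetric e.
Hypothesis ie : irreflexive e.

Lemma split_cyc x q y : uniq (x :: q) -> path e x q -> y \in x :: q ->
  y != last x q -> e (last x q) y ->
  (exists p, is_cycle e p) \/ exists p1, q = rcons p1 (last x q) /\ last x p1 = y.
Proof.
move=> uq hp hin; move: uq hp; case/splitPl: hin => p1 p2 hy uq hp hne hl.
case: p2 hy hne hl uq hp => [|z [|w r]] hy hne hl uq hp.
- by move: hne; rewrite cats0 hy eqxx.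
- by right; exists p1; rewrite cats1 last_rcons.
- left; exists [:: y, z, w & r]; split=> //.
  + move: uq; rewrite -cat_cons cat_uniq => /and3P[_ hh u2].
    rewrite cons_uniq u2 andbT; apply/negP=> hin; move/hasP: hh; apply.
    by exists y => //; rewrite -hy mem_last.
  + rewrite /cycle rcons_path; move: hp; rewrite cat_path hy => /andP[_ ->] /=.
    by move: hl; rewrite last_cat hy.
Qed.

Lemma mindeg_cycle (S : {set T}) : S != set0 ->
  (forall x, x \in S -> 1 < #|[set y in S | e x y]|) -> exists p, is_cycle e p.
Proof.
move=> sne hdeg.
have claim : forall j, (exists p, is_cycle e p) \/
   exists x q, [/\ j <= size q, uniq (x :: q), all (fun z => z \in S) (x :: q) & path e x q].
  elim=> [|j [hc|[x [q [hj uq aq pq]]]]].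
  - right; case/set0Pn: sne => x xS; exists x, [::]; split=> //=.
    by rewrite xS.
  - by left.
  - set z := last x q.
    have zS : z \in S by move/allP: aq; apply; rewrite mem_last.
    case: (pickP [pred y | (y \in S) && e z y && (y \notin x :: q)]) => [y /= /andP[/andP[yS ezy] ynq] | hall].
    + right; exists x, (rcons q y); split.
      * by rewrite size_rcons.
      * by rewrite -cons_uniq -rcons_cons rcons_uniq ynq uq.
      * by move: aq => /= /andP[-> aq]; rewrite all_rcons yS aq.
      * by rewrite rcons_path pq.
    + have := hdeg _ zS; case/card_gt1P=> y1 [y2 [h1 h2 hne]].
      move: h1 h2; rewrite !inE => /andP[y1S e1] /andP[y2S e2].
      have m1 : y1 \in x :: q by move: (hall y1) => /=; rewrite y1S e1 /=; case: (y1 \in x :: q).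
      have m2 : y2 \in x :: q by move: (hall y2) => /=; rewrite y2S e2 /=; case: (y2 \in x :: q).
      have n1 : y1 != z by apply/eqP=> h; move: e1; rewrite h ie.
      have n2 : y2 != z by apply/eqP=> h; move: e2; rewrite h ie.
      case: (split_cyc uq pq m1 n1 e1) => [hc|[p1 [hq1 hl1]]]; first by left.
      case: (split_cyc uq pq m2 n2 e2) => [hc|[p2 [hq2 hl2]]]; first by left.
      have hp12 : p1 = p2 by apply: (@rcons_injl _ (last x q)); rewrite -hq1.
      by move: hne; rewrite -hl1 -hl2 hp12 eqxx.
case: (claim #|S|.+1) => [//|[x [q [hj uq aq pq]]]].
have : #|x :: q| <= #|S|.
  apply: subset_leq_card; apply/subsetP=> z zq; by move/allP: aq; apply.
by rewrite (card_uniqP uq) /=; lia.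
Qed.

Lemma acyc_bound (S : {set T}) : (forall p, ~ is_cycle e p) -> S != set0 ->
  \sum_(u in S) #|[set y in S | e u y]| + 2 <= 2 * #|S|.
Proof.
move=> hac; have [n] := ubnP #|S|; elim: n S => // n IH S hS sne.
case: (pickP [pred x | (x \in S) && (#|[set y in S | e x y]| <= 1)]) => [x /= /andP[xS hx]|hall]; last first.
  case: (mindeg_cycle sne) => [u uS|p /hac //].
  by move: (hall u) => /=; rewrite uS /=; case: leqP.
rewrite (bigD1 x) //=.
set S' := S :\ x.
have cS : #|S| = #|S'|.+1 by rewrite (cardsD1 x S) xS.
have hdu : forall u, u \in S' -> #|[set y in S | e u y]| = e u x + #|[set y in S' | e u y]|.
  move=> u uS'; rewrite (cardsD1 x); congr (_ + _).
    by rewrite !inE xS.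
  by apply: eq_card => y; rewrite !inE andbA.
have hsum : \sum_(u in S | u != x) #|[set y in S | e u y]| =
            #|[set y in S | e x y]| + \sum_(u in S') #|[set y in S' | e u y]|.
  rewrite (eq_bigl (fun u => u \in S')); last by move=> u; rewrite !inE andbC.
  rewrite (eq_bigr (fun u => e u x + #|[set y in S' | e u y]|)); last by move=> u /hdu.
  rewrite big_split /=; congr (_ + _).
  rewrite (eq_bigr (fun u => if e u x then 1 else 0)); last by move=> u _; case: (e u x).
  rewrite -big_mkcondr /= (eq_bigl (fun u => u \in [set u in S' | e u x])); last by move=> u; rewrite !inE.
  rewrite sum1_card; apply: eq_card => y; rewrite !inE se.
  by case: (eqVneq y x) => [->|]; rewrite ?ie ?andbF ?andbT.
case: (set_0Vmem S') => [hS0|[w wS']].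
  have hx0 : #|[set y in S | e x y]| = 0.
    apply/eqP; rewrite cards_eq0; apply/eqP/setP=> y; rewrite !inE.
    case yS: (y \in S) => //=; case: (eqVneq y x) => [->|nyx]; first by rewrite ie.
    have : y \in S' by rewrite !inE nyx yS.
    by rewrite hS0 inE.
  rewrite hsum cS hS0 big_set0 hx0 cards0; lia.
have h1 : #|S'| < n by move: hS; rewrite cS.
have h2 : S' != set0 by apply/set0Pn; exists w.
have := IH S' h1 h2; rewrite hsum cS; lia.
Qed.
End Acyc.
End Fwd.

Lemma other_nbr (T : eqType) (a b n p : T) : n != p -> (a == n) || (a == p) ->
  (b == n) || (b == p) -> a != b -> (if n == a then p else n) = b.
Proof.
move=> hnp /orP[/eqP->|/eqP->] /orP[/eqP->|/eqP->]; rewrite ?eqxx //.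
- by move: hnp; rewrite eq_sym => /negbTE ->.
Qed.

Lemma sum_even (T : finType) (F : T -> nat) : (forall u, ~~ odd (F u)) ->
  ~~ odd (\sum_u F u).
Proof.
move=> h; apply: (big_ind (fun x => ~~ odd x)) => //.
by move=> x y hx hy; rewrite oddD (negbTE hx) (negbTE hy).
Qed.

Section Forward.
Variable T : finType.
Variable e : rel T.
Hypothesis hsimple : simple_graph e.
Hypothesis hcactus : is_cactus e.
Hypothesis hbridge : bridgeless e.
Hypothesis hbip : bipartite e.

Let se : symmetric e := hsimple.1.
Let ie : irreflexive e := hsimple.2.

Lemma oncyc u v : e u v -> exists p, is_cycle e p /\ (u, v) \in cycle_edges p.
Proof. by move=> euv; apply: edge_on_cycle => //; apply: hbridge. Qed.

Definition cyc (uv : T * T) : seq T :=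
  epsilon (inhabits [::]) (fun p => is_cycle e p /\ uv \in cycle_edges p).

Lemma cycP u v : e u v -> is_cycle e (cyc (u, v)) /\ (u, v) \in cycle_edges (cyc (u, v)).
Proof. by move=> euv; apply: (epsilon_spec (inhabits [::]) _ (oncyc euv)). Qed.

Lemma clsP u v p : e u v -> is_cycle e p -> (u, v) \in cycle_edges p ->
  cycle_edges p = cycle_edges (cyc (u, v)).
Proof.
move=> euv hp hin; have [hq hin'] := cycP euv.
exact: (hcactus.2 u v p (cyc (u, v)) euv hp hq hin hin').
Qed.

Lemma cyc_size p : is_cycle e p -> 3 < size p.
Proof.
case=> _ s3 hc; case: hbip => f hf; have := cycle_even hf hc.
by move: s3; case: (size p) => [|[|[|[|k]]]].
Qed.

Lemma deg_even v : ~~ odd (deg e v).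
Proof.
pose g y := let p := cyc (v, y) in if next p v == y then prev p v else next p v.
have key : forall y, e v y -> let p := cyc (v, y) in
   [/\ is_cycle e p, v \in p, (y == next p v) || (y == prev p v),
       (g y == next p v) || (g y == prev p v) & g y != y].
  move=> y evy /=; have [[up s3 cp] hin] := cycP evy.
  move: (hin); rewrite ce_char // => /andP[vp hy]; split=> //.
  - by rewrite /g; case: ifP => _; rewrite eqxx ?orbT.
  - rewrite /g; case: ifP => [/eqP h|/negbT]; last by rewrite eq_sym.
    by apply/eqP => hp; move: (next_neq_prev up s3 vp); rewrite h hp eqxx.
apply: inv_even (g) _ _ _.
- move=> y; rewrite inE => evy; have [[up s3 cp] vp _ hg _] := key y evy.
  by rewrite inE; apply: (ce_sub se cp); rewrite ce_char // vp.
- by move=> y; rewrite inE => evy; have [_ _ _ _ ->] := key y evy.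
- move=> y; rewrite inE => evy; have [[up s3 cp] vp hy hg hne] := key y evy.
  set z := g y in hg hne *.
  have evz : e v z by apply: (ce_sub se cp); rewrite ce_char // vp.
  have hz : (v, z) \in cycle_edges (cyc (v, y)) by rewrite ce_char // vp.
  have heq := clsP evz (And3 up s3 cp) hz.
  have [[uq s3q cq] hinq] := cycP evz.
  move: hinq; rewrite ce_char // => /andP[vq hzq].
  have hyq : (v, y) \in cycle_edges (cyc (v, z)).
    by rewrite -heq ce_char // vp.
  move: hyq; rewrite ce_char // => /andP[_ hyq].
  rewrite /g -/z; apply: other_nbr => //.
  exact: next_neq_prev.
Qed.

Definition Eset := [set uv : T * T | e uv.1 uv.2].

Lemma card_E : #|Eset| = \sum_u deg e u.
Proof.
rewrite card_pairs; apply: eq_bigr => u _; rewrite /deg.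
by apply: eq_card => y; rewrite !inE.
Qed.

Lemma half_even : ~~ odd (\sum_u deg e u)./2.
Proof.
case: hbip => f hf.
set ET := Eset :&: [set uv | f uv.1].
have h1 : #|ET| + #|Eset :\: [set uv | f uv.1]| = \sum_u deg e u by rewrite cardsID card_E.
have h2 : #|Eset :\: [set uv | f uv.1]| = #|ET|.
  have swi : injective (fun uv : T * T => (uv.2, uv.1)) by move=> [a b] [c d] [-> ->].
  rewrite -[RHS](card_imset _ swi).
  apply: eq_card => -[a b]; rewrite [in LHS]inE [in LHS]inE /=; apply/idP/imsetP.
  - case/andP; rewrite !inE /= => nfa eab; exists (b, a) => //; rewrite !inE /= se eab /=.
    by move: (hf _ _ eab) nfa; case: (f a); case: (f b).
  - case=> -[c d]; rewrite !inE /= => /andP[ecd fc] [-> ->].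
    rewrite se ecd andbT.
    by move: (hf _ _ ecd) fc; case: (f c); case: (f d).
have h3 : #|ET| = \sum_u (if f u then deg e u else 0).
  rewrite card_pairs; apply: eq_bigr => u _; case: (boolP (f u)) => fu.
  - by apply: eq_card => y; rewrite !inE /= fu andbT.
  - apply/eqP; rewrite cards_eq0; apply/eqP/setP=> y; rewrite !inE /=.
    by rewrite (negbTE fu) andbF.
have -> : (\sum_u deg e u)./2 = #|ET| by rewrite -h1 h2 addnn doubleK.
by rewrite h3; apply: sum_even => u; case: (f u) => //; apply: deg_even.
Qed.

Lemma edge_bound : 0 < #|T| -> 3 * (\sum_u deg e u) <= 8 * (#|T| - 1).
Proof.
move=> hT; case/card_gt0P: hT => x0 _.
set K := [set cycle_edges (cyc uv) | uv in Eset].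
pose rep (C : {set T * T}) := odflt (x0, x0) [pick z in C].
set R := [set rep C | C in K].
set R2 := R :|: [set (uv.2, uv.1) | uv in R].
pose e' := fun x y => e x y && ((x, y) \notin R2).
have hR2 : forall a b, ((a, b) \in R2) = ((b, a) \in R2).
  suff h : forall a b, (a, b) \in R2 -> (b, a) \in R2.
    by move=> a b; apply/idP/idP; apply: h.
  move=> a b; rewrite !inE => /orP[hR|/imsetP[[c d] hcd [-> ->]]].
  - by apply/orP; right; apply/imsetP; exists (a, b).
  - by rewrite /= hcd.
have se' : symmetric e' by move=> a b; rewrite /e' se hR2.
have ie' : irreflexive e' by move=> a; rewrite /e' ie.
have hac : forall p, ~ is_cycle e' p.
  move=> p [up s3 cp].
  have sub' : subrel e' e by move=> a b /andP[].
  have cpe : cycle e p := sub_cycle sub' cp.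
  have [u up'] : exists u, u \in p by case: (p) s3 => [|u r] //; exists u; rewrite mem_head.
  have huv : (u, next p u) \in cycle_edges p by rewrite ce_char // up' eqxx.
  have euv : e u (next p u) := ce_sub se cpe huv.
  have hcl := clsP euv (And3 up s3 cpe) huv.
  have hK : cycle_edges p \in K.
    by rewrite hcl; apply/imsetP; exists (u, next p u) => //; rewrite inE.
  have hrep : rep (cycle_edges p) \in cycle_edges p.
    rewrite /rep; case: pickP => [z hz //|h].
    by rewrite h in huv.
  have : rep (cycle_edges p) \in R2.
    by rewrite !inE; apply/orP; left; apply/imsetP; exists (cycle_edges p).
  case: (rep _) hrep => a b hab habR.
  by have := ce_sub se' cp hab; rewrite /e' habR andbF.
have hb := acyc_bound se' ie' (S := setT) hac.
have hT0 : [set: T] != set0 by apply/set0Pn; exists x0.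
move: {hb}(hb hT0); rewrite cardsT.
have -> : \sum_(u in [set: T]) #|[set y in [set: T] | e' u y]| = #|Eset :\: R2|.
  rewrite card_pairs; apply: eq_big => u; first by rewrite inE.
  move=> _; apply: eq_card => y; rewrite !inE /e' /=; case: (e u y) => //; rewrite /R2 !inE /=; by case: (_ \in R); case: (_ \in [set (uv.2, uv.1) | uv in R]).
have h1 := cardsID R2 Eset.
have h2 : #|Eset :&: R2| <= #|R2| by apply: subset_leq_card; apply: subsetIr.
have h3 : #|R2| <= #|R| + #|[set (uv.2, uv.1) | uv in R]| := leq_card_setU _ _.
have h4 : #|[set (uv.2, uv.1) | uv in R]| <= #|R| := leq_imset_card _ _.
have h5 : #|R| <= #|K| := leq_imset_card _ _.
have hKcyc : forall C, C \in K -> exists uv, [/\ uv \in Eset, is_cycle e (cyc uv) & C = cycle_edges (cyc uv)].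
  move=> C /imsetP[[a b] hab ->]; exists (a, b); split=> //.
  have eab : e a b by rewrite inE in hab.
  by case: (cycP eab).
have htriv : trivIset K.
  apply/trivIsetP => C1 C2 h1C h2C hne.
  rewrite -setI_eq0; apply/negPn/negP => /set0Pn[[a b]]; rewrite inE => /andP[ha hb].
  have [uv1 [_ hc1 hC1]] := hKcyc _ h1C.
  have [uv2 [_ hc2 hC2]] := hKcyc _ h2C.
  have eab : e a b by case: hc1 => _ _ c1; apply: (ce_sub se c1); rewrite -hC1.
  move: hne; rewrite hC1 hC2 (clsP eab hc1) -?hC1 // (clsP eab hc2) -?hC2 // eqxx.
  by [].
have h6 : 8 * #|K| <= #|Eset|.
  have -> : 8 * #|K| = \sum_(C in K) 8 by rewrite sum_nat_const mulnC.
  have hs : \sum_(C in K) 8 <= \sum_(C in K) #|C|.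
    apply: leq_sum => C /hKcyc[uv [_ hc ->]]; have s4 := cyc_size hc.
    case: hc => u3 s3 _; rewrite card_ce //.
    by move: s4; lia.
  apply: (leq_trans hs).
  have hcov : #|cover K| = \sum_(C in K) #|C|.
    by apply/eqP; rewrite (leq_card_cover K).2.
  rewrite -hcov; apply: subset_leq_card; apply/subsetP => z /bigcupP[C /hKcyc[uv [_ hc ->]] hz].
  case: z hz => a b hz; rewrite inE /=; case: hc => _ _ c1; exact: (ce_sub se c1 hz).
rewrite card_E in h1 h6.
lia.
Qed.
End Forward.

Section Bwd.
Variable T : finType.
Implicit Types (c p q : seq T) (u v x y : T).

Lemma conn_avoid (e : rel T) p x y : uniq p -> 2 < size p -> cycle e p ->
  x \in p -> next p x = y -> connect (remove_edge e x y) y x.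
Proof.
move=> up sp cp xp hn.
have yp : y \in p by rewrite -hn mem_next.
case: (rot_to yp) => i r hr.
have ur : uniq (y :: r) by rewrite -hr rot_uniq.
have cr : cycle e (y :: r) by rewrite -hr rot_cycle.
have sr : 2 < size (y :: r) by rewrite -hr size_rot.
have hl : last y r = x.
  by rewrite -prev_head // -hr prev_rot // -hn prev_next.
case/lastP: r hr ur cr sr hl => [|r1 z] // hr ur cr sr.
rewrite last_rcons => hz; subst z.
move: cr; rewrite /cycle rcons_path => /andP[hp _].
move: hp; rewrite rcons_path => /andP[hp1 hlast].
have ur' : uniq (rcons (y :: r1) x) by [].
move: ur'; rewrite rcons_uniq => /andP[xn ur1].
have r1n : r1 != [::] by case: (r1) sr.
have hw : last y r1 \in r1 by case: (r1) r1n => [|w s] //= _; rewrite mem_last.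
have yr1 : y \notin r1 by move: ur1; rewrite cons_uniq => /andP[].
apply/connectP; exists (rcons r1 x); last by rewrite last_rcons.
rewrite rcons_path; apply/andP; split.
- apply: (sub_in_path (P := fun z => z != x) (e := e) (e' := remove_edge e x y)).
  + move=> a b ha hb eab; rewrite /remove_edge eab /=.
    by rewrite (negbTE ha) (negbTE hb) /= andbF.
  + by apply/allP => z zin; apply/eqP => h; move: xn; rewrite -h zin.
  + exact: hp1.
- rewrite /remove_edge hlast /=.
  have h1 : last y r1 != x by apply/eqP => h; move: xn; rewrite -h inE hw orbT.
  have h2 : last y r1 != y by apply/eqP => h; move: yr1; rewrite -{1}h hw.
  by rewrite (negbTE h1) (negbTE h2).
Qed.

Lemma remove_edge_sym (e : rel T) u v : symmetric e -> symmetric (remove_edge e u v).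
Proof.
move=> se a b; rewrite /remove_edge se; congr (_ && ~~ _).
by case: (a == u); case: (b == v); case: (a == v); case: (b == u).
Qed.

Lemma remove_edge_swap (e : rel T) u v : remove_edge e u v =2 remove_edge e v u.
Proof.
by move=> a b; rewrite /remove_edge orbC.
Qed.

Lemma no_bridge (e : rel T) : symmetric e -> connected_graph e ->
  (forall u v, e u v -> exists p, is_cycle e p /\ (u, v) \in cycle_edges p) ->
  bridgeless e.
Proof.
move=> se conn hc u v euv.
have huv : connect (remove_edge e u v) u v.
  have [p [[up sp cp] hin]] := hc u v euv.
  move: hin; rewrite inE /= => /andP[/andP[un vn] /orP[/eqP h|/eqP h]].
  - by rewrite (sym_connect_sym (remove_edge_sym u v se)); apply: conn_avoid h.
  - rewrite (eq_connect (remove_edge_swap e u v)); exact: conn_avoid h.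
have sym' := sym_connect_sym (remove_edge_sym u v se).
move=> x y; apply: (connect_sub _ (conn x y)) => a b eab.
case: (boolP ((a == u) && (b == v) || (a == v) && (b == u))).
- case/orP => /andP[/eqP-> /eqP->] //; by rewrite sym'.
- by move=> hn; apply: connect1; rewrite /remove_edge eab hn.
Qed.

Definition erel (E : {set T * T}) : rel T := fun x y => (x, y) \in E.

Record Inv (E : {set T * T}) (S : {set T}) : Prop := {
  i_sym : forall x y, ((x, y) \in E) = ((y, x) \in E);
  i_irr : forall x, (x, x) \notin E;
  i_supp : forall x y, (x, y) \in E -> x \in S;
  i_conn : forall x y, x \in S -> y \in S -> connect (erel E) x y;
  i_cyc : forall x y, (x, y) \in E ->
            exists p, is_cycle (erel E) p /\ (x, y) \in cycle_edges p;
  i_cact : forall u v p q, (u, v) \in E -> is_cycle (erel E) p -> is_cycle (erel E) q ->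
            (u, v) \in cycle_edges p -> (u, v) \in cycle_edges q ->
            cycle_edges p = cycle_edges q;
  i_bip : exists f : T -> bool, forall x y, (x, y) \in E -> f x != f y }.

Lemma next_cons_nth (a : T) xs i : uniq (a :: xs) -> i < size xs ->
  next (a :: xs) (nth a xs i) = nth a xs i.+1.
Proof.
move=> u hi; rewrite next_nth.
have hin : nth a xs i \in xs by rewrite mem_nth.
rewrite inE hin orbT /=.
have hne : a != nth a xs i by apply/eqP => h; move: u; rewrite /= h hin.
by rewrite (negbTE hne) index_uniq //; case/andP: u.
Qed.

Lemma prev_cons_nth (a : T) xs i : uniq (a :: xs) -> i.+1 < size xs ->
  prev (a :: xs) (nth a xs i.+1) = nth a xs i.
Proof.
move=> u hi; rewrite prev_nth.
have hin : nth a xs i.+1 \in xs by rewrite mem_nth.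
rewrite inE hin orbT index_uniq //; by case/andP: u.
Qed.

Lemma closure2 (a : T) xs (A : pred T) : uniq (a :: xs) -> (exists2 x, x \in xs & A x) ->
  (forall z, z \in xs -> A z -> A (next (a :: xs) z) && A (prev (a :: xs) z)) ->
  forall z, z \in a :: xs -> A z.
Proof.
move=> u [x xin Ax] hcl.
set i0 := index x xs.
have hi0 : i0 < size xs by rewrite index_mem.
have up : forall k, i0 + k <= size xs -> A (nth a xs (i0 + k)).
  elim=> [|k IH] h; first by rewrite addn0 nth_index.
  have hk : i0 + k < size xs by lia.
  have := hcl _ (mem_nth a hk) (IH (ltnW hk)); rewrite next_cons_nth //.
  by rewrite addnS => /andP[].
have dn : forall k, k <= i0 -> A (nth a xs (i0 - k)).
  elim=> [|k IH] h; first by rewrite subn0 nth_index.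
  have hk : i0 - k < size xs by lia.
  have := hcl _ (mem_nth a hk) (IH (ltnW h)).
  have -> : i0 - k = (i0 - k.+1).+1 by lia.
  by rewrite prev_cons_nth ?prednK //; [case/andP| lia].
have all_i : forall j, j <= size xs -> A (nth a xs j).
  move=> j hj; case: (leqP i0 j) => h.
  - by have := up (j - i0); rewrite subnKC //; apply; lia.
  - by have := dn (i0 - j); rewrite subKn ?(ltnW h) //; apply; lia.
move=> z; rewrite inE => /orP[/eqP->|zin].
- by have := all_i _ (leqnn _); rewrite nth_default.
- by rewrite -(nth_index a zin); apply: all_i; apply: ltnW; rewrite index_mem.
Qed.


Lemma two_sets (n p a b z : T) : a != b -> (a == n) || (a == p) -> (b == n) || (b == p) ->
  ((z == a) || (z == b)) = ((z == n) || (z == p)).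
Proof.
move=> hab /orP[/eqP ha|/eqP ha] /orP[/eqP hb|/eqP hb]; subst.
- by rewrite eqxx in hab.
- by [].
- by rewrite orbC.
- by rewrite eqxx in hab.
Qed.

Section Attach.
Variables (E : {set T * T}) (S : {set T}) (a : T) (xs : seq T).
Hypothesis hI : Inv E S.
Hypothesis aS : a \in S.
Hypothesis uxs : uniq xs.
Hypothesis xsS : forall x, x \in xs -> x \notin S.
Hypothesis oxs : odd (size xs).
Hypothesis sxs : 3 <= size xs.

Local Notation c := (a :: xs).
Local Notation E2 := (E :|: cycle_edges (a :: xs)).

Lemma axs : a \notin xs.
Proof. by apply/negP => h; move: (xsS h); rewrite aS. Qed.

Lemma uc : uniq c.
Proof. by rewrite cons_uniq axs uxs. Qed.

Lemma sc : 2 < size c.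
Proof. by rewrite /=; lia. Qed.

Lemma E_S x y : (x, y) \in E -> (x \in S) && (y \in S).
Proof.
move=> h; rewrite (i_supp hI h) /=; apply: (i_supp hI (y := x)).
by rewrite (i_sym hI).
Qed.

Lemma inc_S z : z \in c -> z \in S -> z = a.
Proof.
rewrite inE => /orP[/eqP // | /xsS h] zS.
by rewrite zS in h.
Qed.

Lemma Ec_a x y : (x, y) \in E -> (x, y) \in cycle_edges c -> False.
Proof.
move=> hE hC; case/andP: (E_S hE) => xS yS; case/andP: (ce_mem hC) => xc yc.
move: hE; rewrite (inc_S xc xS) (inc_S yc yS).
by rewrite (negbTE (i_irr hI a)).
Qed.

Lemma nbr_xs y z : y \in xs -> ((y, z) \in E2) = ((y, z) \in cycle_edges c).
Proof.
move=> yin; rewrite in_setU; case h: ((y, z) \in E) => //=.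
by case/andP: (E_S h) => yS _; move: (xsS yin); rewrite yS.
Qed.

Lemma E2_sym x y : ((x, y) \in E2) = ((y, x) \in E2).
Proof. by rewrite !in_setU (i_sym hI) ce_sym. Qed.

Lemma cyc_xs p : is_cycle (erel E2) p -> (exists2 x, x \in p & x \in xs) ->
  cycle_edges p = cycle_edges c.
Proof.
case=> up sp cp [x xp xin].
have nb : forall y, y \in xs -> y \in p -> forall z,
    ((z == next p y) || (z == prev p y)) = ((z == next c y) || (z == prev c y)).
  move=> y yin yp z.
  have h1 : (y, next p y) \in cycle_edges c.
    by rewrite -nbr_xs //; exact: (next_cycle cp yp).
  have h2 : (y, prev p y) \in cycle_edges c.
    by rewrite -nbr_xs // E2_sym; exact: (prev_cycle cp yp).
  rewrite ce_char ?uc // in h1; rewrite ce_char ?uc // in h2.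
  case/andP: h1 => _ h1; case/andP: h2 => _ h2.
  by apply: two_sets => //; apply: next_neq_prev.
have allp : forall z, z \in c -> z \in p.
  apply: (closure2 (A := fun z => z \in p) uc); first by exists x.
  move=> z zin zp; have h := nb z zin zp.
  have := h (next c z); have := h (prev c z); rewrite !eqxx !orbT.
  by case/orP=> /eqP-> /orP[/eqP->|/eqP->]; rewrite ?mem_next ?mem_prev zp.
apply: (ce_incl uc sc up sp).
have key : forall u v, u \in xs -> (u, v) \in cycle_edges c -> (u, v) \in cycle_edges p.
  move=> u v uin; rewrite !ce_char ?uc // => /andP[uc' hv].
  by rewrite (allp _ uc') /= nb // allp.
move=> [u v] huv; case/andP: (ce_mem huv) => uc' vc'.
move: uc'; rewrite inE => /orP[/eqP hu|uin]; last exact: key.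
move: vc'; rewrite inE => /orP[/eqP hv|vin].
  by move: huv; rewrite hu hv (negbTE (ce_irr _ uc (ltnW sc))).
by rewrite ce_sym; apply: key => //; rewrite ce_sym.
Qed.

Lemma noxs_cyc p : is_cycle (erel E2) p -> ~~ has (fun z => z \in xs) p ->
  is_cycle (erel E) p.
Proof.
case=> up sp cp hn; split=> //.
apply: (sub_in_cycle (P := fun z => z \notin xs) (e := erel E2)) cp.
  move=> x y hx hy; rewrite /erel in_setU => /orP[//|hc].
  case/andP: (ce_mem hc); rewrite !inE (negbTE hx) (negbTE hy) !orbF => /eqP hx' /eqP hy'.
  by move: hc; rewrite hx' hy' (negbTE (ce_irr _ uc (ltnW sc))).
by apply/allP => z zp; apply/negP => zx; move/hasP: hn; apply; exists z.
Qed.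

Lemma attach_inv : Inv E2 (S :|: [set x in xs]).
Proof.
have se2 : symmetric (erel E2) by move=> x y; rewrite /erel E2_sym.
have sub2 : subrel (erel E) (erel E2) by move=> x y h; rewrite /erel in_setU; move: h; rewrite /erel => ->.
have cc : cycle (erel E2) c.
  by apply: (sub_cycle _ (cycle_ce uc)) => x y h; rewrite /erel in_setU; move: h => /= ->; rewrite orbT.
split.
- exact: E2_sym.
- by move=> x; rewrite in_setU negb_or (i_irr hI) /=; apply: ce_irr; [exact: uc | exact: ltnW sc].
- move=> x y; rewrite !in_setU => /orP[h|h]; first by rewrite (i_supp hI h).
  case/andP: (ce_mem h); rewrite inE => /orP[/eqP->|xin] _; first by rewrite aS.
  by apply/orP; right; rewrite ?inE.
- suff ha : forall z, z \in S :|: [set x in xs] -> connect (erel E2) a z.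
    move=> x y hx hy; apply: (connect_trans _ (ha _ hy)).
    by rewrite (sym_connect_sym se2); apply: ha.
  move=> z; rewrite in_setU => /orP[zS|].
  + apply: (connect_sub _ (i_conn hI aS zS)) => x y h.
    by apply: connect1; apply: sub2.
  + rewrite inE => zin; move: cc; rewrite /cycle rcons_path => /andP[hp _].
    by apply: (path_connect hp); rewrite inE zin orbT.
- move=> x y; rewrite in_setU => /orP[h|h].
  + have [p [[up sp cp] hin]] := i_cyc hI h.
    by exists p; split=> //; split=> //; apply: sub_cycle cp.
  + exists c; split=> //; split=> //; [exact: uc | exact: sc].
- move=> u v p q huv hp hq hup huq.
  case: (boolP (has (fun z => z \in xs) p)) => hpx;
  case: (boolP (has (fun z => z \in xs) q)) => hqx.
  + by rewrite (cyc_xs hp (hasP hpx)) (cyc_xs hq (hasP hqx)).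
  + exfalso; have [_ _ cq] := noxs_cyc hq hqx.
    have hE : (u, v) \in E by apply: (ce_sub (i_sym hI) cq huq).
    by apply: (Ec_a hE); rewrite -(cyc_xs hp (hasP hpx)).
  + exfalso; have [_ _ cp] := noxs_cyc hp hpx.
    have hE : (u, v) \in E by apply: (ce_sub (i_sym hI) cp hup).
    by apply: (Ec_a hE); rewrite -(cyc_xs hq (hasP hqx)).
  + have hp' := noxs_cyc hp hpx; have hq' := noxs_cyc hq hqx.
    have [_ _ cp] := hp'.
    have hE : (u, v) \in E by apply: (ce_sub (i_sym hI) cp hup).
    exact: (i_cact hI hE hp' hq' hup huq).
- have [f hf] := i_bip hI.
  pose F := fun y => if y \in xs then f a (+) odd (index y c) else f y.
  have Fc : forall z, z \in c -> F z = f a (+) odd (index z c).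
    move=> z; rewrite inE => /orP[/eqP->|zin]; last by rewrite /F zin.
    by rewrite /F (negbTE axs) /= eqxx addbF.
  have key : forall z, z \in c -> F (next c z) != F z.
    move=> z zc; have nc : next c z \in c by rewrite mem_next.
    rewrite (Fc _ zc) (Fc _ nc).
    have hi : index z c <= size xs by have := index_mem z c; rewrite zc /=; lia.
    rewrite next_nth zc.
    have [hlt|heq] : index z c < size xs \/ index z c = size xs by lia.
    + have win : nth a xs (index z c) \in xs by rewrite mem_nth.
      have hne : a != nth a xs (index z c) by apply/eqP => h; move: axs; rewrite h win.
      have hidx : index (nth a xs (index z c)) c = (index z c).+1.
        by rewrite {1}/index /= (negbTE hne) -/(index _ xs) index_uniq.
      rewrite hidx /=.
      by case: (f a); case: (odd (index z c)).
    + rewrite heq nth_default //= eqxx oxs.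
      by case: (f a).
  exists F => x y; rewrite in_setU => /orP[h|h].
  + case/andP: (E_S h) => xS yS.
    have xn : x \notin xs by apply/negP => /xsS; rewrite xS.
    have yn : y \notin xs by apply/negP => /xsS; rewrite yS.
    by rewrite /F (negbTE xn) (negbTE yn); apply: hf.
  + move: h; rewrite inE /= => /andP[/andP[xc yc] /orP[/eqP<-|/eqP<-]].
    * by rewrite eq_sym key.
    * exact: key.
Qed.

Lemma attach_deg v : deg (erel E2) v = deg (erel E) v + (if v \in c then 2 else 0).
Proof.
rewrite /deg -(ce_nbr v uc sc).
have -> : [set y | erel E2 v y] = [set y | (v, y) \in E] :|: [set y | (v, y) \in cycle_edges c].
  by apply/setP => y; rewrite /erel !inE.
rewrite cardsU.
have -> : [set y | (v, y) \in E] :&: [set y | (v, y) \in cycle_edges c] = set0.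
  apply/setP => y; rewrite !inE; apply/negP => /andP[h1 h2].
  by apply: (Ec_a h1); rewrite inE.
by rewrite cards0 subn0.
Qed.

End Attach.

End Bwd.

Section Construct.
Variable T : finType.

Lemma inv0 (a : T) : Inv set0 [set a].
Proof.
split.
all: try by move=> x y; rewrite !inE.
all: try by move=> x; rewrite !inE.
all: try by move=> u v p q; rewrite !inE.
- by move=> x y; rewrite !inE => /eqP-> /eqP->; apply: connect0.
- by exists (fun _ => true) => x y; rewrite inE.
Qed.

Lemma deg_out E S (v : T) : Inv E S -> v \notin S -> deg (erel E) v = 0.
Proof.
move=> hI vn; apply/eqP; rewrite cards_eq0; apply/eqP/setP => y; rewrite !inE.
by apply/negP => h; rewrite (i_supp hI h) in vn.
Qed.

Lemma construct (S : {set T}) (s : T -> nat) : S != set0 ->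
  (forall v, v \in S -> 0 < s v) -> ~~ odd (\sum_(v in S) s v) ->
  3 * (\sum_(v in S) s v) + 4 <= 4 * #|S| ->
  exists E, Inv E S /\ forall v, v \in S -> deg (erel E) v = 2 * s v.
Proof.
have [m hm] := ubnP (\sum_(v in S) s v).
elim: m S s hm => // m IH S s hm sne spos hev hbd.
have hN : #|S| <= \sum_(v in S) s v.
  by rewrite -sum1_card; apply: leq_sum => v /spos.
case: (pickP [pred v in S | 1 < s v]) => [a /andP[aS sa] | hall].
- set U := [set v in S | s v == 1].
  have aU : a \notin U by rewrite inE aS /=; move: sa; case: (s a) => [|[|k]].
  have hU1 : #|U| <= #|S| - 1.
    rewrite (cardsD1 a S) aS add1n subn1 /=; apply: subset_leq_card.
    apply/subsetP => v; rewrite !inE => /andP[vS hv]; rewrite vS andbT.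
    by apply/eqP => h; move: aU; rewrite -h inE vS hv.
  have hU2 : 2 * #|S| <= \sum_(v in S) s v + #|U|.
    have h : \sum_(v in S) 2 <= \sum_(v in S) (s v + (s v == 1)).
      by apply: leq_sum => v vS; have := spos v vS; case: (s v) => [|[|k]].
    move: h; rewrite sum_nat_const big_split /= mulnC.
    suff -> : \sum_(v in S) (s v == 1 : nat) = #|U| by [].
    rewrite -sum1_card big_mkcond /= [RHS]big_mkcond /=; apply: eq_bigr => v _.
    by rewrite inE; case: (v \in S); case: (s v == 1).
  have hU3 : 3 <= #|U| by lia.
  set xs := take 3 (enum U).
  have sxs : size xs = 3 by rewrite size_takel // -cardE.
  have uxs : uniq xs by apply: take_uniq; apply: enum_uniq.
  have xsU : forall x, x \in xs -> x \in U by move=> x h; rewrite -mem_enum; exact: mem_take h.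
  set X := [set x in xs].
  have cX : #|X| = 3 by rewrite -sxs -(card_uniqP uxs); apply: eq_card => x; rewrite inE.
  have XS : X \subset S by apply/subsetP => x; rewrite inE => /xsU; rewrite inE => /andP[].
  set S' := S :\: X.
  have hSX : S :&: X = X by apply/setIidPr.
  have aX : a \notin X by apply/negP; rewrite inE => /xsU; rewrite (negbTE aU).
  have aS' : a \in S' by rewrite inE aX aS.
  have cS' : #|S'| + 3 = #|S|.
    by rewrite -(cardsID X S) hSX cX addnC.
  pose s' := fun v => if v == a then (s a).-1 else s v.
  have hsum' : \sum_(v in S') s' v + 4 = \sum_(v in S) s v.
    rewrite [in RHS](big_setID X) /= hSX -/S'.
    have -> : \sum_(v in X) s v = 3.
      by rewrite -cX -sum1_card; apply: eq_bigr => v; rewrite inE => /xsU; rewrite inE => /andP[_ /eqP ->].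
    rewrite (bigD1 a aS') [in RHS](bigD1 a aS') /= /s' eqxx.
    rewrite (eq_bigr s); last by move=> v /andP[_ /negbTE ->].
    by move: sa; case: (s a) => [|k] //= _; lia.
  have sxs' : 3 <= size xs by rewrite sxs.
  have oxs : odd (size xs) by rewrite sxs.
  have xsS' : forall x, x \in xs -> x \notin S'.
    by move=> x xin; rewrite inE negb_and negbK inE xin.
  have [E' [hI' hdeg']] : exists E, Inv E S' /\ forall v, v \in S' -> deg (erel E) v = 2 * s' v.
    apply: IH.
    + by move: hm; rewrite -hsum'; lia.
    + by apply/set0Pn; exists a.
    + move=> v vS'; rewrite /s'; case: eqP => [_|_].
      * by move: sa; case: (s a) => [|[|k]].
      * by apply: spos; move: vS'; rewrite inE => /andP[].
    + by move: hev; rewrite -hsum' addnC oddD /=.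
    + by move: hbd; rewrite -hsum' -cS'; lia.
  have hI2 := attach_inv hI' aS' uxs xsS' oxs sxs'.
  have hSS : S' :|: [set x in xs] = S.
    apply/setP => v; rewrite !inE; case vx: (v \in xs) => /=; last by rewrite orbF.
    by apply/esym/(subsetP XS); rewrite inE vx.
  rewrite hSS in hI2.
  exists (E' :|: cycle_edges (a :: xs)); split=> // v vS.
  rewrite (attach_deg hI' aS' uxs xsS' oxs sxs').
  case vX: (v \in X).
  + have vn : v \notin S' by rewrite inE vX.
    have vxs : v \in xs by move: vX; rewrite inE.
    have := xsU _ vxs; rewrite inE => /andP[_ /eqP sv].
    by rewrite (deg_out hI' vn) sv inE vxs orbT.
  + have vS' : v \in S' by rewrite inE vX vS.
    rewrite hdeg' // /s' inE; move: vX; rewrite inE => ->; rewrite orbF.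
    case: eqP => [->|_]; last by rewrite addn0.
    by move: sa; case: (s a) => [|k] //= _; lia.
- have s1 : forall v, v \in S -> s v = 1.
    move=> v vS; have := spos v vS; have := hall v; rewrite /= vS /=.
    by case: (s v) => [|[|k]].
  have hsum : \sum_(v in S) s v = #|S|.
    by rewrite -sum1_card; apply: eq_bigr => v /s1.
  case/set0Pn: sne => a aS.
  set xs := enum (S :\ a).
  have sxs : size xs = #|S| - 1 by rewrite -cardE (cardsD1 a S) aS /=; lia.
  have uxs : uniq xs := enum_uniq _.
  have xsS : forall x, x \in xs -> x \notin [set a].
    by move=> x; rewrite mem_enum !inE => /andP[].
  have oxs : odd (size xs).
    by rewrite sxs; move: hev hbd; rewrite hsum; case: #|S| => [|k] //= /negPn; rewrite subn1.
  have sxs3 : 3 <= size xs by rewrite sxs; move: hbd; rewrite hsum; lia.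
  have aa : a \in [set a] by rewrite inE.
  have hI2 := attach_inv (inv0 a) aa uxs xsS oxs sxs3.
  have hSS : [set a] :|: [set x in xs] = S.
    apply/setP => v; rewrite !inE mem_enum !inE.
    by case: eqP => [->|_] //=; rewrite ?aS.
  rewrite hSS in hI2.
  exists (set0 :|: cycle_edges (a :: xs)); split=> // v vS.
  rewrite (attach_deg (inv0 a) aa uxs xsS oxs sxs3).
  rewrite (s1 _ vS) (_ : deg (erel set0) v = 0).
    rewrite inE mem_enum !inE vS andbT.
    by case: eqP.
  by apply/eqP; rewrite cards_eq0; apply/eqP/setP => y; rewrite !inE /erel inE.
Qed.

End Construct.
Unset Implicit Arguments.

Theorem theorem5p5 (n : nat) (d : 'I_n -> nat) :
  4 <= n -> degree_sequence d ->
  (exists e : rel 'I_n,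
     [/\ realization d e, is_cactus e, bridgeless e & bipartite e]) <->
  [/\ (\sum_(i < n) d i)./2 <= 2 * ((2 * (n - 1)) %/ 3),
      ~~ odd ((\sum_(i < n) d i)./2)
    & forall i, ~~ odd (d i)].
Proof.
move=> hn [hd hsum _]; split.
- case=> e [[hs hdeg] hc hb hbip].
  have hS : \sum_(i < n) d i = \sum_u deg e u by apply: eq_bigr => i _; rewrite hdeg.
  have ev := deg_even hs hc hb.
  have hh := half_even hs hc hb hbip.
  have hT : 0 < #|'I_n| by rewrite card_ord; lia.
  have hbd := edge_bound hs hc hb hbip hT.
  rewrite card_ord in hbd.
  have hM := sum_even ev.
  rewrite hS; split => //; last by move=> i; rewrite -hdeg.
  move: hbd hh hM; set M := \sum_u deg e u => hbd hh hM.
  have h1 := odd_double_half M; have h2 := odd_double_half M./2.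
  rewrite (negbTE hM) (negbTE hh) /= !add0n in h1 h2.
  rewrite -!muln2 in h1 h2.
  lia.
- case=> hb hm hev.
  pose s := fun v => (d v)./2.
  have hds : forall v, d v = 2 * s v.
    move=> v; have := odd_double_half (d v); rewrite (negbTE (hev v)) add0n -muln2 mulnC.
    by move=> ->.
  have hsS : \sum_(v in [set: 'I_n]) s v = (\sum_(i < n) d i)./2.
    rewrite (eq_bigr (fun i => 2 * s i) (fun i _ => hds i)) -big_distrr /=.
    rewrite mul2n doubleK; apply: eq_bigl => v; by rewrite inE.
  have c1 : [set: 'I_n] != set0.
    by apply/set0Pn; exists (Ordinal (leq_trans (isT : 0 < 4) hn)).
  have c2 : forall v, v \in [set: 'I_n] -> 0 < s v.
    by move=> v _; have := hd v; rewrite hds; lia.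
  have c3 : ~~ odd (\sum_(v in [set: 'I_n]) s v) by rewrite hsS.
  have c4 : 3 * (\sum_(v in [set: 'I_n]) s v) + 4 <= 4 * #|[set: 'I_n]|.
    by rewrite hsS cardsT card_ord; lia.
  have [E [hI hdegE]] := construct c1 c2 c3 c4.
  exists (erel E); split.
  * split; first split.
    -- by move=> x y; rewrite /erel (i_sym hI).
    -- by move=> x; rewrite /erel (negbTE (i_irr hI x)).
    -- by move=> i; rewrite hdegE ?inE // hds.
  * split; last exact: (i_cact hI).
    by move=> x y; apply: (i_conn hI); rewrite inE.
  * apply: no_bridge.
    -- by move=> x y; rewrite /erel (i_sym hI).
    -- by move=> x y; apply: (i_conn hI); rewrite inE.
    -- by move=> x y; apply: (i_cyc hI).
  * exact: (i_bip hI).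
Qed.
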